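(* Let $n\ge 4$, let $\lambda=(\lambda_1,\lambda_2)$ with integers $\lambda_1\ge\lambda_2\ge 0$, and let $(\lambda,i,j,k)$ be admissible. For fixed $w \in W$, the expression $\langle w, \psi_{\lambda,(i,j,k)}(\{x_1,\dots,x_i\})(\gamma)\rangle$ is a polynomial in the entries of the orthogonal matrix $\gamma \in \mathrm{O}(n)$ and of the vectors $x_1,\dots,x_i$.
   Context: Setting. Fix an angle $\theta$ and consider the graph on $S^{n-1}$ in which distinct $x,y$ are adjacent if $\langle x,y\rangle > \cos\theta$; $\mathcal{I}_2$ is the set of independent sets of this graph of cardinality at most $2$, and $\mathcal{I}_{=i}$ those of cardinality exactly $i$. $\mathrm{O}(n,\mathbb{C})$ denotes complex $n\times n$ matrices $g$ with $g^{\sf T}g = I$, $\mathrm{O}(n)$ the real ones. Let $U=\mathbb{C}^2$ with basis $e_1,e_2$, $m = \lambda_1-\lambda_2$, $W = \mathrm{Sym}^{\lambda_2}(\wedge^2U)\otimes\mathrm{Sym}^m(U)$ with induced action $\rho$ of $2\times 2$ complex matrices, orthonormal basis $w_k = (e_1\wedge e_2)^{\lambda_2}e_1^{m-k}e_2^k$ ($0\le k\le m$), and $c_1(k) = \lambda_2+m-k$, $c_2(k) = \lambda_2+k$. Let $\omega = (I_2\ \ iI_2\ \ 0)$ ($2\times n$) and $\epsilon = \binom{I_2}{0}$ ($n\times 2$); for $w\in W$, $f_w(\gamma) = \rho(\omega\gamma\epsilon)w$ for $\gamma\in \mathrm{O}(n,\mathbb{C})$; $V$ is the span of the right translates $\gamma\mapsto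 f_w(\gamma g)$, $g \in \mathrm{O}(n,\mathbb{C})$, $\pi$ the right-translation representation of $\mathrm{O}(n)$ on $V$, $\Psi(w) = f_w$. For $J = \{x,y\}\in\mathcal{I}_2$ (with $x=y$ if $|J|=1$): $p_j(J) = \langle x,y\rangle^j$, $q_1(J) = \sqrt{2+2\langle x,y\rangle}$, $q_2(J) = \sqrt{2-2\langle x,y\rangle}$; orbit representative $R_J = \{(q_1/2,q_2/2,0,\dots,0),(q_1/2,-q_2/2,0,\dots,0)\}$ for $|J|\ge1$ and $\emptyset$ for $J=\emptyset$; a section is $s\colon\mathcal{I}_2\to\mathrm{O}(n)$ with $s(J)R_J = J$. Admissible tuples: $i=0$: $\lambda=(0,0)$, $j=k=0$; $i=1$: $\lambda_2=0$, $j=k=0$; $i=2$: $j\ge0$, $0\le k\le m$, $\lambda_2+k$ even. Define $\psi_{\lambda,(i,j,k)}(J) = \xi_{\lambda,i,j,k}(J)\pi(s(J))\Psi(w_k)$ with $\xi = 1$ if $i=|J|<2$, $\xi = p_j(J)q_1(J)^{c_1(k)}q_2(J)^{c_2(k)}$ if $i=|J|=2$, and $\xi=0$ otherwise (with $0^0 = 1$); this does not depend on the choice of section. *)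

(* Defs.v *)
From HB Require Import structures.
From mathcomp Require Import all_boot all_algebra.
From mathcomp Require Import reals.
From mathcomp Require Import complex.
From mathcomp Require Export mpoly.
Export GRing.Theory Num.Theory.

Set Implicit Arguments.
Unset Strict Implicit.
Unset Printing Implicit Defensive.

Local Open Scope ring_scope.
Local Open Scope complex_scope.

Section Defs.
Variables (R : realType) (n : nat).
Local Notation C := (R[i]).

Definition ipr (x y : 'rV[R]_n) : R := \sum_(l < n) x 0 l * y 0 l.

Definition orthO (g : 'M[R]_n) : Prop := g^T *m g = 1%:M.

(* the points x_1, ..., x_i of J = {x_1,...,x_i}, given as the rows of X *)
Definition rowsJ (i : nat) (X : 'M[R]_(i, n)) : seq 'rV[R]_n :=
  [seq row a X | a <- enum 'I_i].

(* J = {x_1,...,x_i} is an element of I_{=i} for the graph with threshold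
   c = cos theta: unit vectors, pairwise distinct, pairwise non-adjacent *)
Definition in_I_eq (c : R) (i : nat) (X : 'M[R]_(i, n)) : Prop :=
  (forall a : 'I_i, ipr (row a X) (row a X) = 1) /\
  (forall a b : 'I_i, a != b ->
      row a X != row b X /\ ipr (row a X) (row b X) <= c).

(* p_1(J) = <x,y> where J = {x,y} (x = y if |J| = 1) *)
Definition pJ (i : nat) (X : 'M[R]_(i, n)) : R :=
  ipr (nth 0 (rowsJ X) 0) (nth 0 (rowsJ X) i.-1).

Definition q1 (t : R) : R := Num.sqrt (2 + 2 * t).
Definition q2 (t : R) : R := Num.sqrt (2 - 2 * t).

(* orbit representative R_J, as an i x n matrix whose rows are its points:
   row 0 = (q1/2, q2/2, 0, ..., 0), row 1 = (q1/2, -q2/2, 0, ..., 0) *)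
Definition RJ (i : nat) (X : 'M[R]_(i, n)) : 'M[R]_(i, n) :=
  \matrix_(a < i, l < n)
    (if (l : nat) == 0%N then q1 (pJ X) / 2
     else if (l : nat) == 1%N then
       (if (a : nat) == 0%N then q2 (pJ X) / 2 else - (q2 (pJ X) / 2))
     else 0).

(* g is an admissible value s(J) of a section: g in O(n) and g R_J = J
   (g acts on column vectors, i.e. on a row vector r by r *m g^T) *)
Definition section_value (i : nat) (X : 'M[R]_(i, n)) (g : 'M[R]_n) : Prop :=
  orthO g /\ rowsJ (RJ X *m g^T) =i rowsJ X.

Definition omega : 'M[C]_(2, n) :=
  \matrix_(a < 2, l < n)
    (if (l : nat) == (a : nat) then 1
     else if (l : nat) == (a + 2)%N then 'i else 0).
Definition epsilon : 'M[C]_(n, 2) :=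
  \matrix_(l < n, b < 2) ((l : nat) == (b : nat))%:R.

Definition toC (p q : nat) (M : 'M[R]_(p, q)) : 'M[C]_(p, q) :=
  map_mx (fun x => x%:C) M.

End Defs.

(* The representation rho of 2x2 complex matrices on
   W = Sym^{l2}(wedge^2 U) (x) Sym^m(U), in the orthonormal basis
   w_k = (e1 /\ e2)^{l2} e1^{m-k} e2^k:  rho_entry l2 m A l k is the
   w_l-coordinate of rho(A) w_k, i.e.
   det(A)^{l2} * [coefficient of e1^{m-l} e2^l in (A e1)^{m-k} (A e2)^k],
   computed by dehomogenizing e1 := 1, e2 := 'X. *)
Definition rho_entry (R : realType) (l2 m : nat) (A : 'M[R[i]]_2) (l k : nat)
  : R[i] :=
  \det A ^+ l2 *
  ((((A 0 0)%:P + (A 1 0)%:P * 'X) ^+ (m - k) *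
    ((A 0 1)%:P + (A 1 1)%:P * 'X) ^+ k)`_l).

Definition admissible (l1 l2 i j k : nat) : Prop :=
  [/\ i = 0%N, l1 = 0%N, l2 = 0%N, j = 0%N & k = 0%N] \/
  [/\ i = 1%N, l2 = 0%N, j = 0%N & k = 0%N] \/
  [/\ i = 2%N, (k <= l1 - l2)%N & ~~ odd (l2 + k)].

Definition xi (R : realType) (n l1 l2 i j k : nat) (X : 'M[R]_(i, n)) : R :=
  if (i < 2)%N then 1
  else if i == 2%N then
    pJ X ^+ j * q1 (pJ X) ^+ (l2 + (l1 - l2) - k) * q2 (pJ X) ^+ (l2 + k)
  else 0.

(* psi_{lambda,(i,j,k)}(J)(gamma) = xi(J) * rho(omega gamma s(J) epsilon) w_k,
   as a vector of W = C^{m+1} (coordinates in the basis w_0..w_m) *)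
Definition psi_val (R : realType) (n l1 l2 i j k : nat)
  (X : 'M[R]_(i, n)) (g gamma : 'M[R]_n) : 'I_((l1 - l2).+1) -> R[i] :=
  fun l => (@xi R n l1 l2 i j k X)%:C *
    rho_entry l2 (l1 - l2) (@omega R n *m toC (gamma *m g) *m @epsilon R n) l k.

Definition ipW (R : realType) (m : nat) (w v : 'I_m.+1 -> R[i]) : R[i] :=
  \sum_(l < m.+1) w l * (v l)^*.

Definition vars (R : realType) (n i : nat) (gamma : 'M[R]_n)
  (X : 'M[R]_(i, n)) : 'I_(n * n + i * n) -> R[i] :=
  fun v => ((row_mx (mxvec gamma) (mxvec X)) 0 v)%:C.

(* Main.v *)
Require Import Defs.
From HB Require Import structures.
From mathcomp Require Import all_boot all_algebra.
From mathcomp Require Import reals complex mpoly.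
From mathcomp Require Import ring lra perm.
From Stdlib Require Import FunctionalExtensionality.
Local Open Scope ring_scope.
Local Open Scope complex_scope.
Import Num.Theory.

Lemma conj_real (R : realType) (x : R) : Num.conj (x%:C) = (x%:C :> R[i]).
Proof. apply/eqP; rewrite eq_complex /= oppr0 !eqxx //. Qed.

Section PF.
Context {R : realType} {n i : nat}.
Local Notation C := (R[i]).
Local Notation N := (n * n + i * n)%N.
Local Notation FT := ('M[R]_n -> 'M[R]_(i, n) -> C).

Definition PF (f : FT) := exists P : {mpoly C[N]},
  forall gamma X, f gamma X = P.@[vars gamma X].

Lemma PF_ext {f g : FT} : (forall gamma X, f gamma X = g gamma X) -> PF g -> PF f.
Proof. by move=> e [P HP]; exists P => ga X; rewrite e HP. Qed.

Lemma PF_const (c : C) : PF (fun _ _ => c).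
Proof. by exists c%:MP => ga X; rewrite mevalC. Qed.

Lemma PF_add {f g : FT} : PF f -> PF g -> PF (fun ga X => f ga X + g ga X).
Proof. by move=> [P HP] [Q HQ]; exists (P + Q) => ga X; rewrite mevalD HP HQ. Qed.

Lemma PF_mul {f g : FT} : PF f -> PF g -> PF (fun ga X => f ga X * g ga X).
Proof. by move=> [P HP] [Q HQ]; exists (P * Q) => ga X; rewrite mevalM HP HQ. Qed.

Lemma PF_opp {f : FT} : PF f -> PF (fun ga X => - f ga X).
Proof. by move=> [P HP]; exists (- P) => ga X; rewrite mevalN HP. Qed.

Lemma PF_exp {f : FT} e : PF f -> PF (fun ga X => f ga X ^+ e).
Proof.
move=> Hf; elim: e => [|e IH].
  by apply: (PF_ext _ (PF_const 1)) => ga X /=; rewrite expr0.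
by apply: (PF_ext _ (PF_mul Hf IH)) => ga X; rewrite exprS.
Qed.

Lemma PF_sum {I : Type} (r : seq I) (P : pred I) {F : I -> FT} :
  (forall a, PF (F a)) -> PF (fun ga X => \sum_(a <- r | P a) F a ga X).
Proof.
move=> HF; elim: r => [|a r IH].
  by apply: (PF_ext _ (PF_const 0)) => ga X; rewrite big_nil.
case Pa: (P a).
  by apply: (PF_ext _ (PF_add (HF a) IH)) => ga X; rewrite big_cons Pa.
by apply: (PF_ext _ IH) => ga X; rewrite big_cons Pa.
Qed.

Lemma PF_prod {I : Type} (r : seq I) (P : pred I) {F : I -> FT} :
  (forall a, PF (F a)) -> PF (fun ga X => \prod_(a <- r | P a) F a ga X).
Proof.
move=> HF; elim: r => [|a r IH].
  by apply: (PF_ext _ (PF_const 1)) => ga X; rewrite big_nil.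
case Pa: (P a).
  by apply: (PF_ext _ (PF_mul (HF a) IH)) => ga X; rewrite big_cons Pa.
by apply: (PF_ext _ IH) => ga X; rewrite big_cons Pa.
Qed.

Lemma PF_gamma a b : PF (fun ga X => (ga a b)%:C).
Proof.
exists 'X_(lshift (i * n) (mxvec_index a b)) => ga X.
by rewrite mevalXU /vars row_mxEl mxvecE.
Qed.

Lemma PF_X a b : PF (fun ga X => (X a b)%:C).
Proof.
exists 'X_(rshift (n * n) (mxvec_index a b)) => ga X.
by rewrite mevalXU /vars row_mxEr mxvecE.
Qed.

Lemma PF_conj {f : FT} : PF f -> PF (fun ga X => Num.conj (f ga X)).
Proof.
move=> [P HP].
exists (\sum_(m <- msupp P) (Num.conj (P@_m)) *: 'X_[m]) => ga X.
rewrite HP mevalE rmorph_sum.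
rewrite (big_morph (meval (vars ga X)) (@mevalD _ _ _) (@meval0 _ _ _)).
apply: eq_bigr => m _; rewrite mevalZ mevalX rmorphM rmorph_prod.
congr (_ * _); apply: eq_bigr => a _; rewrite rmorphXn; congr (_ ^+ _); exact: conj_real.
Qed.

Definition PFP (p : 'M[R]_n -> 'M[R]_(i, n) -> {poly C}) :=
  forall l, PF (fun ga X => (p ga X)`_l).

Lemma PFP_C {f : FT} : PF f -> PFP (fun ga X => (f ga X)%:P).
Proof.
move=> Hf l; case: (eqVneq l 0%N) => [->|nl].
  by apply: (PF_ext _ Hf) => ga X; rewrite coefC.
by apply: (PF_ext _ (PF_const 0)) => ga X; rewrite coefC (negPf nl).
Qed.

Lemma PFP_X : PFP (fun _ _ => 'X).
Proof. by move=> l; apply: PF_const. Qed.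

Lemma PFP_add {p q} : PFP p -> PFP q -> PFP (fun ga X => p ga X + q ga X).
Proof.
move=> Hp Hq l; apply: (PF_ext _ (PF_add (Hp l) (Hq l))) => ga X.
by rewrite coefD.
Qed.

Lemma PFP_mul {p q} : PFP p -> PFP q -> PFP (fun ga X => p ga X * q ga X).
Proof.
move=> Hp Hq l.
apply: (PF_ext _ (PF_sum _ _ (fun a : 'I_l.+1 => PF_mul (Hp a) (Hq (l - a)%N)))).
by move=> ga X; rewrite coefM.
Qed.

Lemma PFP_exp {p} e : PFP p -> PFP (fun ga X => p ga X ^+ e).
Proof.
move=> Hp; elim: e => [|e IH].
  by move=> l; apply: (PF_ext _ (PFP_C (PF_const 1) l)) => ga X; rewrite expr0.
by move=> l; apply: (PF_ext _ (PFP_mul Hp IH l)) => ga X; rewrite exprS.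
Qed.

Lemma PF_det m (M : 'M[R]_n -> 'M[R]_(i, n) -> 'M[C]_m) :
  (forall a b, PF (fun ga X => M ga X a b)) -> PF (fun ga X => \det (M ga X)).
Proof.
move=> HM.
have H : PF (fun ga X => \sum_(s : 'S_m) (-1) ^+ s * \prod_a M ga X a (s a)).
  apply: PF_sum => s; apply: PF_mul; first exact: PF_const.
  by apply: PF_prod => a; apply: HM.
by apply: (PF_ext _ H) => ga X.
Qed.

Lemma PF_rho l2 m (M : 'M[R]_n -> 'M[R]_(i, n) -> 'M[C]_2) l k :
  (forall a b, PF (fun ga X => M ga X a b)) ->
  PF (fun ga X => rho_entry l2 m (M ga X) l k).
Proof.
move=> HM; rewrite /rho_entry.
apply: PF_mul; first by apply: PF_exp; apply: PF_det.
apply: PFP_mul; apply: PFP_exp; apply: PFP_add; try apply: PFP_C => //;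
  apply: PFP_mul; (apply: PFP_C => // || apply: PFP_X).
Qed.

End PF.

Section Mat.
Context {R : realType} {n : nat}.

Definition Gv (ga : 'M[R]_n) (u : 'I_n -> R) (a : 'I_2) : R[i] :=
  \sum_(m < n) @omega R n a m * \sum_(l < n) (ga m l)%:C * (u l)%:C.

Definition Mat2 ga (U : 'I_2 -> 'I_n -> R) : 'M[R[i]]_2 :=
  \matrix_(a, b) Gv ga (U b) a.

Lemma A_Mat2 (H : (2 <= n)%N) ga g :
  @omega R n *m toC (ga *m g) *m @epsilon R n =
  Mat2 ga (fun b l => g l (widen_ord H b)).
Proof.
apply/matrixP => a b; rewrite !mxE.
rewrite (bigD1 (widen_ord H b)) //= big1 ?addr0.
  rewrite !mxE eqxx mulr1; apply: eq_bigr => m _.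
  by rewrite !mxE rmorph_sum; congr (_ * _); apply: eq_bigr => l _; rewrite rmorphM.
move=> l nl; rewrite !mxE.
have -> : ((l : nat) == b) = false.
  by apply/negbTE; apply: contra nl => /eqP e; apply/eqP/val_inj.
by rewrite mulr0.
Qed.

Lemma Mat2_diag ga U (f : 'I_2 -> R) :
  Mat2 ga U *m diag_mx (\row_b (f b)%:C) = Mat2 ga (fun b l => f b * U b l).
Proof.
rewrite mul_mx_diag; apply/matrixP => a b; rewrite !mxE /Gv mulr_suml.
apply: eq_bigr => m _; rewrite -mulrA mulr_suml; congr (_ * _).
by apply: eq_bigr => l _; rewrite rmorphM; ring.
Qed.

Lemma Mat2_ext ga U U' : (forall b l, U b l = U' b l) -> Mat2 ga U = Mat2 ga U'.
Proof.
move=> e; apply/matrixP => a b; rewrite !mxE /Gv.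
by apply: eq_bigr => m _; congr (_ * _); apply: eq_bigr => l _; rewrite e.
Qed.

End Mat.

Lemma rho_scale (R : realType) l2 m (A : 'M[R[i]]_2) d l k : (k <= m)%N ->
  rho_entry l2 m (A *m diag_mx d) l k =
  d 0 0 ^+ (l2 + m - k) * d 0 1 ^+ (l2 + k) * rho_entry l2 m A l k.
Proof.
move=> km; rewrite /rho_entry det_mulmx det_diag big_ord_recl big_ord1 mul_mx_diag !mxE.
have -> : lift ord0 ord0 = 1 :> 'I_2 by apply/val_inj.
set a00 := A 0 0; set a10 := A 1 0; set a01 := A 0 1; set a11 := A 1 1.
set d0 := d 0 0; set d1 := d 0 1.
have -> : (a00 * d0)%:P + (a10 * d0)%:P * 'X = d0%:P * (a00%:P + a10%:P * 'X).
  by rewrite !polyCM; ring.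
have -> : (a01 * d1)%:P + (a11 * d1)%:P * 'X = d1%:P * (a01%:P + a11%:P * 'X).
  by rewrite !polyCM; ring.
rewrite !exprMn -!rmorphXn mulrACA -rmorphM coefCM.
rewrite -addnBA // !exprD.
set P := (_ `_ l); set D := \det A.
ring.
Qed.

Section S3.
Context {R : realType} {n : nat}.

Lemma rowE' p q (A : 'M[R]_(p, q)) a b : row a A 0 b = A a b.
Proof. by rewrite mxE. Qed.

Lemma rowsJ1 {p} (X : 'M[R]_(1, p)) : rowsJ X = [:: row 0 X].
Proof. by rewrite /rowsJ enum_ordSl enum_ord0. Qed.

Lemma rowsJ2 {p} (X : 'M[R]_(2, p)) : rowsJ X = [:: row 0 X; row 1 X].
Proof.
rewrite /rowsJ enum_ordSl /= enum_ordSl enum_ord0 /=.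
by have -> : lift ord0 ord0 = 1 :> 'I_2 by apply/val_inj.
Qed.

Lemma RJg_entry i (X : 'M[R]_(i, n.+2)) (g : 'M[R]_n.+2) a l :
  (RJ X *m g^T) a l = q1 (pJ X) / 2 * g l 0 +
    (if (a : nat) == 0%N then q2 (pJ X) / 2 else - (q2 (pJ X) / 2)) * g l 1.
Proof.
rewrite mxE big_ord_recl big_ord_recl big1 ?addr0.
  rewrite !mxE /=.
  have -> : lift ord0 ord0 = 1 :> 'I_n.+2 by apply/val_inj.
  by [].
by move=> m _; rewrite !mxE /= mul0r.
Qed.

Lemma sec2 (X : 'M[R]_(2, n.+2)) g : row 0 X != row 1 X ->
  rowsJ (RJ X *m g^T) =i rowsJ X ->
  exists s : R, (s = 1 \/ s = -1) /\ forall l,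
    q1 (pJ X) * g l 0 = X 0 l + X 1 l /\ q2 (pJ X) * g l 1 = s * (X 0 l - X 1 l).
Proof.
move=> xy H.
have Hx := H (row 0 X); have Hy := H (row 1 X).
have Hr0 := H (row 0 (RJ X *m g^T)); have Hr1 := H (row 1 (RJ X *m g^T)).

rewrite !rowsJ2 !inE !eqxx ?orbT in Hx Hy Hr0 Hr1.
move/esym: Hr0 => Hr0; move/esym: Hr1 => Hr1.
set r0 := row 0 (RJ X *m g^T) in Hx Hy Hr0 Hr1 *.
set r1 := row 1 (RJ X *m g^T) in Hx Hy Hr0 Hr1 *.
set x := row 0 X in Hx Hy Hr0 Hr1 xy *; set y := row 1 X in Hx Hy Hr0 Hr1 xy *.
have E l : (RJ X *m g^T) 0 l + (RJ X *m g^T) 1 l = q1 (pJ X) * g l 0 /\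
           (RJ X *m g^T) 0 l - (RJ X *m g^T) 1 l = q2 (pJ X) * g l 1.
  by rewrite !RJg_entry /=; split; field.
have [[e0 e1]|[e0 e1]] : (r0 = x /\ r1 = y) \/ (r0 = y /\ r1 = x).
- case/orP: Hr0 => /eqP e0; case/orP: Hr1 => /eqP e1.
  + by move: Hy xy; rewrite e0 e1 orbb => /eqP ->; rewrite eqxx.
  + by left.
  + by right.
  + by move: Hx xy; rewrite e0 e1 orbb => /eqP ->; rewrite eqxx.
- exists (1 : R); split; first by left.
  move=> l; have [E1 E2] := E l.
  have f0 : (RJ X *m g^T) 0 l = X 0 l by move: (congr1 (fun r : 'rV_n.+2 => r 0 l) e0); rewrite /r0 /x /y !rowE'.
  have f1 : (RJ X *m g^T) 1 l = X 1 l by move: (congr1 (fun r : 'rV_n.+2 => r 0 l) e1); rewrite /r1 /x /y !rowE'.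
  by rewrite -E1 -E2 f0 f1 mul1r.
- exists (-1 : R); split; first by right.
  move=> l; have [E1 E2] := E l.
  have f0 : (RJ X *m g^T) 0 l = X 1 l by move: (congr1 (fun r : 'rV_n.+2 => r 0 l) e0); rewrite /r0 /x /y !rowE'.
  have f1 : (RJ X *m g^T) 1 l = X 0 l by move: (congr1 (fun r : 'rV_n.+2 => r 0 l) e1); rewrite /r1 /x /y !rowE'.
  by rewrite -E1 -E2 f0 f1; split; [rewrite addrC | ring].
Qed.

End S3.

Section S4.
Context {R : realType} {n : nat}.

Definition Nf {p} (X : 'M[R]_(2, p)) : 'I_2 -> 'I_p -> R :=
  fun b l => if (b : nat) == 0%N then X 0 l + X 1 l else X 0 l - X 1 l.

Lemma psi2 (X : 'M[R]_(2, n.+2)) g ga l1 l2 j k l :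
  (k <= l1 - l2)%N -> ~~ odd (l2 + k) -> row 0 X != row 1 X ->
  rowsJ (RJ X *m g^T) =i rowsJ X ->
  @psi_val R n.+2 l1 l2 2 j k X g ga l =
  ((pJ X ^+ j)%:C) * rho_entry l2 (l1 - l2) (Mat2 ga (Nf X)) l k.
Proof.
move=> km ev xy H; have [s [hs E]] := sec2 X g xy H.
rewrite /psi_val /xi /= (A_Mat2 (isT : (2 <= n.+2)%N)) !rmorphM !rmorphXn /=.
set fq := fun b : 'I_2 => if (b : nat) == 0%N then q1 (pJ X) else q2 (pJ X).
set fs := fun b : 'I_2 => if (b : nat) == 0%N then 1 else s.
have e : Mat2 ga (fun b l' => g l' (widen_ord (isT : (2 <= n.+2)%N) b))
           *m diag_mx (\row_b (fq b)%:C) =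
         Mat2 ga (Nf X) *m diag_mx (\row_b (fs b)%:C).
  rewrite !Mat2_diag; apply: Mat2_ext => b l'; have [E1 E2] := E l'.
  case: b => [[|[|//]] Hb].
    have -> : widen_ord (isT : (2 <= n.+2)%N) (Ordinal Hb) = 0 by apply/val_inj.
    by rewrite /fq /fs /Nf /= E1 mul1r.
  have -> : widen_ord (isT : (2 <= n.+2)%N) (Ordinal Hb) = 1 by apply/val_inj.
  by rewrite /fq /fs /Nf /= E2.
have := congr1 (fun A => rho_entry l2 (l1 - l2) A l k) e.
rewrite /= !rho_scale // !mxE /fq /fs /= rmorph1 expr1n mul1r.
have -> : s%:C ^+ (l2 + k) = 1 :> R[i].
  case: hs => ->; first by rewrite rmorph1 expr1n.
  by rewrite rmorphN1 -signr_odd (negbTE ev) expr0.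
rewrite mul1r -!mulrA => ->; by [].
Qed.

Lemma sec1 (X : 'M[R]_(1, n.+2)) g : ipr (row 0 X) (row 0 X) = 1 ->
  rowsJ (RJ X *m g^T) =i rowsJ X -> forall l, g l 0 = X 0 l.
Proof.
move=> u H l.
have Hr := H (row 0 (RJ X *m g^T)); rewrite !rowsJ1 !inE eqxx in Hr.
move/esym/eqP: Hr => Hr.
have := congr1 (fun r : 'rV_n.+2 => r 0 l) Hr; rewrite /= !rowE' RJg_entry /=.
have -> : pJ X = 1 by rewrite /pJ rowsJ1 /= u.
have -> : q1 (1 : R) = 2.
  rewrite /q1 (_ : 2 + 2 * 1 = 2 ^+ 2) ?sqrtr_sqr ?ger0_norm //; ring.
have -> : q2 (1 : R) = 0 by rewrite /q2 mulr1 subrr sqrtr0.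
by move=> <-; field.
Qed.

Lemma psi1 (X : 'M[R]_(1, n.+2)) g ga l1 l :
  ipr (row 0 X) (row 0 X) = 1 -> rowsJ (RJ X *m g^T) =i rowsJ X ->
  @psi_val R n.+2 l1 0 1 0 0 X g ga l =
  rho_entry 0 (l1 - 0) (Mat2 ga (fun b l' => X 0 l')) l 0.
Proof.
move=> u H; have E := sec1 X g u H.
rewrite /psi_val /xi /= (A_Mat2 (isT : (2 <= n.+2)%N)) rmorph1 mul1r.
rewrite /rho_entry !expr0 !mxE.
have -> : (fun l' => g l' (widen_ord (isT : (2 <= n.+2)%N) 0)) = (fun l' => X 0 l').
  apply: functional_extensionality => l'; rewrite -E; congr (g _ _); exact/val_inj.
by [].
Qed.

Lemma psi0 (X : 'M[R]_(0, n.+2)) g ga l :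
  @psi_val R n.+2 0 0 0 0 0 X g ga l = ((1 : {poly R[i]})`_l).
Proof.
by rewrite /psi_val /xi /rho_entry /= !expr0 rmorph1 !mul1r.
Qed.

End S4.

Lemma PF_Mat2 (R : realType) n i (U : 'M[R]_(i, n) -> 'I_2 -> 'I_n -> R) :
  (forall b l, PF (fun ga X => (U X b l)%:C)) ->
  forall a b, PF (fun ga X => Mat2 ga (U X) a b).
Proof.
move=> HU a b.
have H : PF (fun (ga : 'M[R]_n) (X : 'M[R]_(i, n)) =>
   \sum_(m < n) @omega R n a m * \sum_(l < n) (ga m l)%:C * (U X b l)%:C).
  apply: PF_sum => m; apply: PF_mul; first exact: PF_const.
  by apply: PF_sum => l; apply: PF_mul; [apply: PF_gamma | apply: HU].
by apply: (PF_ext _ H) => ga X; rewrite mxE.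
Qed.

Lemma main_from (R : realType) n i m (w : 'I_m.+1 -> R[i])
  (Hyp : 'M[R]_n -> 'M[R]_(i, n) -> 'M[R]_n -> Prop)
  (psi : 'M[R]_n -> 'M[R]_(i, n) -> 'M[R]_n -> 'I_m.+1 -> R[i])
  (F : 'I_m.+1 -> 'M[R]_n -> 'M[R]_(i, n) -> R[i]) :
  (forall l, PF (F l)) ->
  (forall ga X g, Hyp ga X g -> forall l, psi ga X g l = F l ga X) ->
  exists P : {mpoly R[i][n * n + i * n]},
    forall ga X g, Hyp ga X g -> ipW w (psi ga X g) = P.@[vars ga X].
Proof.
move=> HF Hpsi.
have [P HP] : PF (fun ga X => \sum_(l < m.+1) w l * Num.conj (F l ga X)).
  apply: PF_sum => l; apply: PF_mul; first exact: PF_const.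
  by apply: PF_conj.
exists P => ga X g Hg; rewrite -HP /ipW.
by apply: eq_bigr => l _; rewrite (Hpsi ga X g Hg l).
Qed.

Theorem mainTheorem6 (R : realType) (c : R) (n l1 l2 i j k : nat) :
  (4 <= n)%N -> (l2 <= l1)%N -> admissible l1 l2 i j k ->
  forall w : 'I_((l1 - l2).+1) -> R[i],
  exists P : {mpoly R[i][n * n + i * n]},
  forall (gamma : 'M[R]_n) (X : 'M[R]_(i, n)) (g : 'M[R]_n),
    orthO gamma -> in_I_eq c X -> section_value X g ->
    ipW w (@psi_val R n l1 l2 i j k X g gamma) = P.@[vars gamma X].
Proof.
case: n => [|[|n]] // Hn Hl adm w.
suff [P HP] : exists P : {mpoly R[i][n.+2 * n.+2 + i * n.+2]},
  forall ga X g, (orthO ga /\ in_I_eq c X /\ section_value X g) ->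
    ipW w (@psi_val R n.+2 l1 l2 i j k X g ga) = P.@[vars ga X].
  by exists P => ga X g h1 h2 h3; apply: HP.
case: adm => [[Hi H1 H2 Hj Hk]|[[Hi H2 Hj Hk]|[Hi Hk Hev]]]; subst.
- apply: (@main_from _ _ _ _ w _ _ (fun l _ _ => (1 : {poly R[i]})`_l)).
    by move=> l; apply: PF_const.
  by move=> ga X g _ l; rewrite psi0.
- apply: (@main_from _ _ _ _ w _ _ (fun l ga X =>
      rho_entry 0 (l1 - 0) (Mat2 ga (fun b l' => X 0 l')) l 0)).
    move=> l; apply: PF_rho; apply: PF_Mat2 => b l'; exact: PF_X.
  move=> ga X g [_ [[u _] [_ H]]] l; exact: psi1.
- apply: (@main_from _ _ _ _ w _ _ (fun l ga X =>
      ((pJ X ^+ j)%:C) * rho_entry l2 (l1 - l2) (Mat2 ga (Nf X)) l k)).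
    move=> l; apply: PF_mul.
      have H : PF (fun (ga : 'M[R]_n.+2) (X : 'M[R]_(2, n.+2)) =>
          (\sum_(l' < n.+2) (X 0 l')%:C * (X 1 l')%:C) ^+ j).
        by apply: PF_exp; apply: PF_sum => l'; apply: PF_mul; apply: PF_X.
      apply: (PF_ext _ H) => ga X; rewrite rmorphXn /pJ rowsJ2 /= /ipr rmorph_sum.
      by congr (_ ^+ _); apply: eq_bigr => l' _; rewrite rmorphM !rowE'.
    apply: PF_rho; apply: PF_Mat2 => b l'.
    case: b => [[|[|//]] Hb]; rewrite /Nf /=.
      by apply: (PF_ext _ (PF_add (PF_X 0 l') (PF_X 1 l'))) => ga X; rewrite rmorphD.
    by apply: (PF_ext _ (PF_add (PF_X 0 l') (PF_opp (PF_X 1 l')))) => ga X; rewrite rmorphB.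
  move=> ga X g [_ [[_ Hd] [_ H]]] l.
  have xy : row 0 X != row 1 X by have [] := Hd 0 1 isT.
  exact: psi2.
Qed.
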